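(* Let $k \geq 2$ and let $\Sigma_k$ be an alphabet with $k$ letters. For $n \ge 0$ let $p_k(n)$ be the number of palstars of length $2n$ over $\Sigma_k$ and $u_k(n)$ the number of unbordered strings of length $n$ over $\Sigma_k$, and define the formal power series $P_k(X) = \sum_{n \geq 0} p_k(n) X^n$ and $U_k(X) = \sum_{n\geq 0} u_k(n) X^n$. Then $$P_k(X) = \frac{1}{2 - U_k(X)}.$$
   Context: Let $P = \{ x x^R : x \in \Sigma_k^+\}$ be the set of nonempty even-length palindromes over $\Sigma_k$ (here $x^R$ is the reversal of $x$). A palstar is an element of $P^* = \bigcup_{i\ge 0} P^i$, i.e. a (possibly empty) concatenation of nonempty even-length palindromes; the empty string is a palstar, so $p_k(0)=1$. A nonempty string $x$ is a border of a string $y$ if $x \neq y$ and $x$ is both a prefix and a suffix of $y$; $y$ is unbordered if it has no border (so the empty string is unbordered and $u_k(0)=1$). *)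

(* Defs.v *)
From mathcomp Require Import all_boot all_algebra.
From mathcomp Require Import boolp.
Set Implicit Arguments. Unset Strict Implicit. Unset Printing Implicit Defensive.
Import GRing.Theory.
Local Open Scope ring_scope.

Definition palstar (T : eqType) (s : seq T) : Prop :=
  exists xs : seq (seq T),
    all (fun x => x != [::]) xs /\ s = flatten [seq x ++ rev x | x <- xs].

Definition is_border (T : eqType) (x y : seq T) : Prop :=
  x != [::] /\ x != y /\ prefix x y /\ suffix x y.

Definition unbordered (T : eqType) (y : seq T) : Prop :=
  ~ (exists x, is_border x y).

Definition p_count (k n : nat) : nat :=
  #|[set w : (n.*2).-tuple 'I_k | `[< palstar (tval w) >]]|.

Definition u_count (k n : nat) : nat :=
  #|[set w : n.-tuple 'I_k | `[< unbordered (tval w) >]]|.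

(* Formal power series over int, represented by coefficient sequences. *)
Definition pser := nat -> int.
Definition pser_const (c : int) : pser := fun n => if n == 0%N then c else 0.
Definition pser_sub (f g : pser) : pser := fun n => f n - g n.
Definition pser_mul (f g : pser) : pser :=
  fun n => \sum_(i < n.+1) f i * g (n - i)%N.

Definition P_k (k : nat) : pser := fun n => (p_count k n)%:Z.
Definition U_k (k : nat) : pser := fun n => (u_count k n)%:Z.

(* Main.v *)
Require Import Defs.
From mathcomp Require Import all_boot all_algebra.
From mathcomp Require Import boolp.
From mathcomp Require Import zify.
Set Implicit Arguments. Unset Strict Implicit. Unset Printing Implicit Defensive.

Section Words.
Variable T : finType.

Fixpoint W (n : nat) : seq (seq T) :=
  if n is n'.+1 then [seq x :: w | x <- enum T, w <- W n'] else [:: [::]].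

Lemma mem_W n w : (w \in W n) = (size w == n).
Proof.
elim: n w => [|n IH] [|x w] /=.
- by rewrite inE.
- by rewrite inE.
- by apply/allpairsP; case=> -[a b] /= [_ _].
- apply/allpairsP/idP.
    by case=> -[a b] /= [_ hb [ea eb]]; rewrite eb eqSS -IH.
  by move=> h; exists (x, w); rewrite /= mem_enum IH.
Qed.

Lemma uniq_W n : uniq (W n).
Proof.
elim: n => [|n IH] //=; apply: allpairs_uniq => //; first exact: enum_uniq.
by move=> [a b] [c d] _ _ /= [-> ->].
Qed.

Lemma size_W n : size (W n) = #|T| ^ n.
Proof. by elim: n => [|n IH] //=; rewrite size_allpairs IH -cardE expnS. Qed.

Lemma size_partition (X : eqType) (s : seq X) (f : X -> nat) N :
  (forall x, x \in s -> f x < N) ->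
  size s = \sum_(j < N) count (fun x => f x == j) s.
Proof.
elim: s => [|x s IH] H /=; first by rewrite big1.
rewrite big_split /= -IH; last by move=> y hy; apply: H; rewrite inE hy orbT.
have hx : f x < N by apply: H; rewrite inE eqxx.
rewrite (bigD1 (Ordinal hx)) //= eqxx big1 ?addn0 ?add1n // => i hi.
by case: eqP => // e; move: hi; rewrite -val_eqE /= e eqxx.
Qed.

Lemma size_bij (X : eqType) (s t : seq X) : uniq s -> uniq t -> s =i t -> size s = size t.
Proof. by move=> us ut e; apply: perm_size; apply: uniq_perm. Qed.

End Words.

Section Borders.
Variable T : eqType.
Implicit Types w b z : seq T.

Definition isb d w i := (0 < i) && (d %| i) && (take i w == drop (size w - i) w).
Definition bl d w := find (isb d w) (iota 0 (size w)).

Lemma bl_le d w : bl d w <= size w.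
Proof. by rewrite /bl -{2}(size_iota 0 (size w)) find_size. Qed.

Lemma bl_isb d w : bl d w < size w -> isb d w (bl d w).
Proof.
move=> h; have hh : has (isb d w) (iota 0 (size w)) by rewrite has_find size_iota.
by have := nth_find 0 hh; rewrite nth_iota.
Qed.

Lemma bl_min d w i : i < bl d w -> ~~ isb d w i.
Proof.
move=> h; have := before_find 0 h; rewrite nth_iota ?add0n => [->//|].
exact: leq_trans h (bl_le _ _).
Qed.

Lemma bl_eq d w j : j < size w -> isb d w j -> (forall i, i < j -> ~~ isb d w i) -> bl d w = j.
Proof.
move=> hj hb hm; apply/eqP; rewrite eqn_leq; apply/andP; split.
  by rewrite leqNgt; apply/negP => /bl_min; rewrite hb.
rewrite leqNgt; apply/negP => h; have := hm _ h.
by rewrite bl_isb // (leq_trans h (ltnW hj)).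
Qed.

Lemma bl_full d w : (forall i, i < size w -> ~~ isb d w i) -> bl d w = size w.
Proof.
move=> hm; apply/eqP; rewrite eqn_leq bl_le /= leqNgt; apply/negP => h.
by have := hm _ h; rewrite bl_isb.
Qed.

Lemma takedropP (x0 : T) s i : i <= size s ->
  reflect (forall t, t < i -> nth x0 s t = nth x0 s (size s - i + t))
          (take i s == drop (size s - i) s).
Proof.
move=> hi; apply: (iffP eqP) => [e t lt | h].
  by rewrite -(nth_take x0 lt) e nth_drop.
apply: (eq_from_nth (x0 := x0)); first by rewrite size_drop size_takel //; lia.
by move=> t; rewrite size_takel // => lt; rewrite nth_take // nth_drop h.
Qed.

Lemma BT w j i : take j w == drop (size w - j) w -> j <= size w -> i < j ->
  (take i w == drop (size w - i) w) = (take i (take j w) == drop (j - i) (take j w)).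
Proof.
case: w => [|x0 w']; first by rewrite /= leqn0 => _ /eqP ->.
set w := x0 :: w' => hj jn ij.
have sb : size (take j w) = j by rewrite size_takel.
move/(takedropP x0 jn): hj => hj.
have iw : i <= size w by lia.
have ib : i <= size (take j w) by rewrite sb; lia.
have -> : j - i = size (take j w) - i by rewrite sb.
apply/idP/idP => [/(takedropP x0 iw) h|/(takedropP x0 ib) h].
- apply/(takedropP x0 ib) => t lt.
  rewrite sb !nth_take; try lia. rewrite h // (hj (j - i + t)); try lia. f_equal; lia.
- apply/(takedropP x0 iw) => t lt.
  move: (h t lt); rewrite sb !nth_take; try lia. move=> ->. rewrite (hj (j - i + t)); try lia. f_equal; lia.
Qed.

Lemma BT' d w j i : isb d w j -> j <= size w -> i < j -> isb d w i = isb d (take j w) i.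
Proof.
case/andP => _ hj jn ij; rewrite /isb (BT hj jn ij) size_takel //.
Qed.

Lemma B2 d w : d %| size w -> bl d w < size w -> (bl d w).*2 <= size w.
Proof.
case: w => [|x0 w']; first by [].
set w := x0 :: w' => dn hlt; set j := bl d w.
have hb := bl_isb hlt; rewrite leqNgt; apply/negP => hgt.
have hi : j.*2 - size w < j by lia.
move: (bl_min hi); rewrite /isb; case/andP: hb => /andP[j0 dj] /(takedropP x0 (ltnW hlt)) hj.
have -> : 0 < j.*2 - size w by lia.
have -> : d %| j.*2 - size w by apply: dvdn_sub => //; rewrite -muln2 dvdn_mulr.
have iw : j.*2 - size w <= size w by lia.
apply/negP/negPn/(takedropP x0 iw) => t lt.
rewrite hj; last by lia.
rewrite hj; last by lia.
f_equal; lia.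
Qed.

Lemma D1 d w : d %| size w -> bl d w < size w ->
  [/\ w = take (bl d w) w ++ take (size w - (bl d w).*2) (drop (bl d w) w) ++ take (bl d w) w,
      bl d (take (bl d w) w) = bl d w, 0 < bl d w & d %| bl d w].
Proof.
move=> dn hlt; have h2 := B2 dn hlt; set j := bl d w in hlt h2 *.
have hb := bl_isb hlt; rewrite -/j in hb.
case/andP: (hb) => /andP[j0 dj] /eqP hj.
split => //.
- rewrite -{1}(cat_take_drop j w); congr (_ ++ _).
  rewrite -{1}(cat_take_drop (size w - j.*2) (drop j w)) drop_drop hj; congr (_ ++ _).
  f_equal; lia.
- have sb : size (take j w) = j by rewrite size_takel // ltnW.
  rewrite -{2}sb; apply: bl_full => i; rewrite sb => ij.
  by rewrite -(BT' hb (ltnW hlt) ij); apply: bl_min.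
Qed.

Lemma D2 d b z j : size b = j -> 0 < j -> d %| j -> bl d b = j -> bl d (b ++ z ++ b) = j.
Proof.
move=> sb j0 dj hb; set w := b ++ z ++ b.
have sw : size w = j + size z + j by rewrite /w !size_cat sb addnA.
have tw : take j w = b by rewrite /w take_size_cat.
have hw : isb d w j.
  rewrite /isb j0 dj tw sw /w catA drop_size_cat ?eqxx //.
  rewrite size_cat sb; lia.
apply: bl_eq => //; first by lia.
move=> i ij; rewrite (BT' hw _ ij); last by lia.
by rewrite tw; apply: bl_min; rewrite hb.
Qed.
End Borders.

Lemma catIs (T : Type) (s1 s2 t : seq T) : s1 ++ t = s2 ++ t -> s1 = s2.
Proof.
move=> e; have hs : size s1 = size s2 by move: (congr1 size e); rewrite !size_cat; lia.
by rewrite -(take_size_cat t (erefl (size s1))) e take_size_cat.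
Qed.

Section Count.
Variables (T : finType) (lang : pred (seq T)).
Hypothesis L1 : forall b z, lang (b ++ z ++ b) -> lang b && lang z.
Hypothesis L2 : forall b z, lang b -> lang z -> lang (b ++ z ++ b).

Lemma count_bl d n j : d %| n -> 0 < d * j -> d * j < n -> (d * j).*2 <= n ->
  count (fun w => bl d w == d * j) (filter lang (W T n)) =
  count (fun b => bl d b == size b) (filter lang (W T (d * j))) *
  size (filter lang (W T (n - (d * j).*2))).
Proof.
move=> dn j0 jn j2; rewrite -!size_filter -(size_allpairs (fun b z => b ++ z ++ b)).
apply: size_bij.
- by rewrite !filter_uniq // uniq_W.
- apply: allpairs_uniq; try by rewrite !filter_uniq // uniq_W.
  move=> [b z] [b' z'] /allpairsP [[b1 z1] /= [hb _ [-> _]]] /allpairsP [[b2 z2] /= [hb' _ [-> _]]] /= e.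
  move: hb hb'; rewrite !mem_filter !mem_W => /and3P [_ _ /eqP sb] /and3P [_ _ /eqP sb'].
  have e1 : b1 = b2 by move: (congr1 (take (d * j)) e); rewrite !take_size_cat.
  by move: e; rewrite e1 => /(congr1 (drop (d * j))); rewrite !drop_size_cat // => /catIs ->.
- move=> w; rewrite !mem_filter mem_W; apply/idP/allpairsP.
  + case/and3P => /eqP hb hl /eqP sw.
    have hlt : bl d w < size w by rewrite hb sw.
    have dsw : d %| size w by rewrite sw.
    case: (D1 dsw hlt); rewrite hb => ew hbb _ dj.
    have hl' := hl; rewrite ew in hl'; case/andP: (L1 hl') => lb lz.
    exists (take (d * j) w, take (size w - (d * j).*2) (drop (d * j) w)) => /=; split => //.
    * by rewrite !mem_filter lb mem_W size_takel ?hbb ?eqxx // sw ltnW.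
    * rewrite mem_filter lz mem_W size_takel ?sw //.
      by rewrite eqxx.
      by rewrite size_drop sw; lia.
  + case=> -[b z] /=; rewrite !mem_filter !mem_W => -[/and3P [/eqP hb lb /eqP sb] /andP [lz /eqP sz] ->].
    rewrite (D2 z sb j0) ?eqxx ?L2 //=.
      by rewrite !size_cat sb sz; apply/eqP; lia.
    by apply: dvdn_mulr.
    by rewrite hb sb.
Qed.

Lemma count_bl_big d n j : d %| n -> d * j < n -> n < (d * j).*2 ->
  count (fun w => bl d w == d * j) (filter lang (W T n)) = 0.
Proof.
move=> dn jn j2; apply/eqP; rewrite eqn0Ngt -has_count; apply/hasPn => w.
rewrite mem_filter mem_W => /andP [_ /eqP sw]; apply/negP => /eqP hb.
have := B2 (w := w) (d := d); rewrite hb sw => /(_ dn jn); lia.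
Qed.

Lemma count_bl_0 d n : 0 < n ->
  count (fun w => bl d w == 0) (filter lang (W T n)) = 0.
Proof.
move=> n0; apply/eqP; rewrite eqn0Ngt -has_count; apply/hasPn => w.
rewrite mem_filter mem_W => /andP [_ /eqP sw]; apply/negP => /eqP hb.
have : bl d w < size w by rewrite hb sw.
by move/bl_isb; rewrite hb.
Qed.

Lemma partition_bl d n : 0 < d -> d %| n ->
  size (filter lang (W T n)) =
  \sum_(j < (n %/ d).+1) count (fun w => bl d w == d * j) (filter lang (W T n)).
Proof.
move=> d0 dn.
rewrite (@size_partition _ _ (fun w => bl d w %/ d) (n %/ d).+1).
  apply: eq_bigr => j _; apply: eq_in_count => w.
  rewrite mem_filter mem_W => /andP [_ /eqP sw].
  have dbl : d %| bl d w.
    case: (ltnP (bl d w) (size w)) => h.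
      by case/andP: (bl_isb h) => /andP [].
    have e : bl d w = size w by have := bl_le d w; lia.
    by rewrite e sw.
  by rewrite -{2}(divnK dbl) [d * j]mulnC eqn_pmul2r.
move=> w; rewrite mem_filter mem_W => /andP [_ /eqP sw].
by rewrite ltnS leq_div2r // -sw bl_le.
Qed.

End Count.

Section Pal.
Variable T : finType.
Definition pal (w : seq T) := rev w == w.

Lemma L1pal b z : pal (b ++ z ++ b) -> pal b && pal z.
Proof.
rewrite /pal !rev_cat -catA eqseq_cat ?size_rev // => /andP [/eqP hb].
rewrite hb eqxx /= => /eqP /catIs ->; exact: eqxx.
Qed.

Lemma L2pal b z : pal b -> pal z -> pal (b ++ z ++ b).
Proof. by rewrite /pal !rev_cat -catA => /eqP -> /eqP ->. Qed.

Lemma pal_split (w : seq T) : rev w = w -> ~~ odd (size w) ->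
  w = take (size w)./2 w ++ rev (take (size w)./2 w).
Proof.
move=> e ev; set h := (size w)./2.
have sw : size w = h + h by move: (odd_double_half (size w)); rewrite (negbTE ev) -addnn.
rewrite -{1}(cat_take_drop h w); congr (_ ++ _).
rewrite -{1}e drop_rev; congr (rev (take _ _)); rewrite sw; lia.
Qed.

Lemma size_pal m : size (filter pal (W T m.*2)) = #|T| ^ m.
Proof.
transitivity (size (map (fun x => x ++ rev x) (W T m))); last by rewrite size_map size_W.
apply: size_bij.
- by rewrite filter_uniq // uniq_W.
- rewrite map_inj_in_uniq ?uniq_W // => x y; rewrite !mem_W => /eqP sx /eqP sy.
  by move/eqP; rewrite eqseq_cat ?sx ?sy // => /andP [/eqP].
- move=> w; rewrite mem_filter mem_W; apply/andP/mapP.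
  + case=> /eqP e /eqP sw; exists (take (size w)./2 w).
      by rewrite mem_W size_takel sw ?doubleK //; lia.
    apply: pal_split => //; rewrite sw odd_double //.
  + case=> x; rewrite mem_W => /eqP sx ->; split.
      by rewrite /pal rev_cat revK.
    by rewrite size_cat size_rev sx addnn.
Qed.

Definition U m := count (fun w => bl 1 w == size w) (W T m).
Definition Q m := count (fun w => bl 2 w == size w) (filter pal (W T m.*2)).

End Pal.

Definition Rec (X : nat -> nat) K := forall m, 0 < m ->
  K ^ m = X m + \sum_(j < m) (if (0 < j) && (j.*2 <= m) then X j * K ^ (m - j.*2) else 0).

Lemma Rec_uniq X Y K : Rec X K -> Rec Y K -> X 0 = Y 0 -> forall m, X m = Y m.
Proof.
move=> RX RY h0 m; elim: m {-2}m (leqnn m) => [|n IH] m hm.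
  by move: hm; rewrite leqn0 => /eqP ->.
case: m hm => [_|m hm] //.
have := RX m.+1 isT; rewrite (RY m.+1 isT).
have -> : \sum_(j < m.+1) (if (0 < j) && (j.*2 <= m.+1) then X j * K ^ (m.+1 - j.*2) else 0) =
          \sum_(j < m.+1) (if (0 < j) && (j.*2 <= m.+1) then Y j * K ^ (m.+1 - j.*2) else 0).
  apply: eq_bigr => j _; rewrite IH //; have := ltn_ord j; lia.
by move/eqP; rewrite eqn_add2r => /eqP.
Qed.

Section Recs.
Variable T : finType.

Lemma U_rec : Rec (U T) #|T|.
Proof.
move=> m m0; rewrite -(size_W T m) -(filter_predT (W T m)).
rewrite (@partition_bl _ predT 1) // divn1 big_ord_recr /= addnC; congr (_ + _).
  rewrite filter_predT /U; apply: eq_in_count => w; rewrite mem_W mul1n => /eqP ->//.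
apply: eq_bigr => j _.
case: (posnP j) => [->|j0] /=.
  by rewrite (count_bl_0 predT 1 m0).
have jm := ltn_ord j.
case: ifP => h.
  rewrite count_bl //; try by move=> *; rewrite ?mul1n.
  by rewrite !mul1n !filter_predT size_W.
by rewrite count_bl_big // mul1n; lia.
Qed.

Lemma Q_rec : Rec (Q T) #|T|.
Proof.
move=> m m0; rewrite -(size_pal T m).
rewrite (@partition_bl _ (@pal T) 2) // ?dvdn2 ?odd_double //.
have -> : m.*2 %/ 2 = m by rewrite -muln2 mulnK.
rewrite big_ord_recr /= addnC; congr (_ + _).
  rewrite /Q; apply: eq_in_count => w; rewrite mem_filter mem_W => /andP [_ /eqP ->].
  by rewrite mul2n.
apply: eq_bigr => j _.
case: (posnP j) => [->|j0] /=.
  by rewrite muln0 (count_bl_0 _ 2); lia.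
have jm := ltn_ord j.
case: ifP => h.
  rewrite count_bl ?dvdn2 ?odd_double //; try lia.
  - rewrite /Q mul2n; congr (_ * _).
    have -> : m.*2 - (j.*2).*2 = (m - j.*2).*2 by lia.
    by rewrite size_pal.
  - exact: L1pal.
  - exact: L2pal.
by rewrite count_bl_big ?dvdn2 ?odd_double //; try lia; exact: L1pal.
Qed.

Lemma QU m : Q T m = U T m.
Proof.
apply: Rec_uniq; [exact: Q_rec | exact: U_rec |].
by rewrite /Q /U /=.
Qed.

End Recs.

Section Palstar.
Variable T : finType.
Implicit Types w b z x : seq T.

Definition isep w i := (0 < i) && ~~ odd i && pal (take i w).
Definition spp w := find (isep w) (iota 0 (size w).+1).

Lemma spp_le w : spp w <= (size w).+1.
Proof. by rewrite /spp -{2}(size_iota 0 (size w).+1) find_size. Qed.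

Lemma spp_isep w : spp w <= size w -> isep w (spp w).
Proof.
move=> h; have hh : has (isep w) (iota 0 (size w).+1) by rewrite has_find size_iota.
by have := nth_find 0 hh; rewrite nth_iota.
Qed.

Lemma spp_min w i : i < spp w -> ~~ isep w i.
Proof.
move=> h; have := before_find 0 h; rewrite nth_iota ?add0n => [->//|].
exact: leq_trans h (spp_le _).
Qed.

Lemma spp_eq w j : j <= size w -> isep w j -> (forall i, i < j -> ~~ isep w i) -> spp w = j.
Proof.
move=> hj hb hm; apply/eqP; rewrite eqn_leq; apply/andP; split.
  by rewrite leqNgt; apply/negP => /spp_min; rewrite hb.
rewrite leqNgt; apply/negP => h; have := hm _ h.
by rewrite spp_isep // ltnW // (leq_trans h hj).
Qed.

Lemma palstar_nil : palstar ([::] : seq T).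
Proof. by rewrite /palstar; exists [::]. Qed.

Lemma palstar_cat w1 w2 : palstar w1 -> palstar w2 -> palstar (w1 ++ w2).
Proof.
case=> xs [h1 ->] [ys [h2 ->]]; exists (xs ++ ys); split.
  by rewrite all_cat h1 h2.
by rewrite map_cat flatten_cat.
Qed.

Lemma palstar_pal z : rev z = z -> ~~ odd (size z) -> palstar z.
Proof.
move=> e ev; rewrite (pal_split e ev); set x := take _ z.
case: (eqVneq x [::]) => [->|xn]; first exact: palstar_nil.
by exists [:: x]; split; rewrite /= ?xn ?cats0.
Qed.

Lemma palstar_inv w : palstar w -> w != [::] ->
  exists x rest, [/\ x != [::], w = (x ++ rev x) ++ rest & palstar rest].
Proof.
case=> -[|x xs] [ha ->] //= wn; case/andP: ha => xn ha.
by exists x, (flatten [seq y ++ rev y | y <- xs]); split => //; exists xs.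
Qed.

Lemma pal_drop b i : pal b -> i <= size b -> drop (size b - i) b = rev (take i b).
Proof.
move=> /eqP e hi; have := drop_rev (size b - i) b; rewrite e.
by have -> : size b - (size b - i) = i by lia.
Qed.

Lemma isb_pal b i : pal b -> i <= size b -> isb 2 b i -> [/\ 0 < i, ~~ odd i & pal (take i b)].
Proof.
move=> pb hi /andP [/andP [i0 di] /eqP e]; split => //; first by rewrite -dvdn2.
by rewrite /pal -(pal_drop pb hi) -e.
Qed.

Lemma pal_isb b i : pal b -> i <= size b -> 0 < i -> ~~ odd i -> pal (take i b) -> isb 2 b i.
Proof.
move=> pb hi i0 ev pt; rewrite /isb i0 dvdn2 ev /= (pal_drop pb hi).
by move/eqP: pt => ->.
Qed.

Lemma even_sub (a b : nat) : ~~ odd a -> ~~ odd b -> ~~ odd (a - b).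
Proof.
move=> ha hb; case: (leqP b a) => h; first by rewrite oddB // (negbTE ha) (negbTE hb).
by rewrite (eqP (ltnW h)).
Qed.

Lemma KMP w : palstar w -> w != [::] ->
  [/\ (0 < spp w) && ~~ odd (spp w), spp w <= size w, pal (take (spp w) w),
      bl 2 (take (spp w) w) = spp w & palstar (drop (spp w) w)].
Proof.
move=> pw wn; case: (palstar_inv pw wn) => x [rest [xn ew pr]].
set y := x ++ rev x in ew.
have sy : size y = (size x).*2 by rewrite size_cat size_rev addnn.
have py : pal y by rewrite /pal /y rev_cat revK.
have hsy : isep w (size y).
  by rewrite /isep ew take_size_cat // sy odd_double double_gt0 lt0n size_eq0 xn.
have jy : spp w <= size y by rewrite leqNgt; apply/negP => /spp_min; rewrite hsy.
have yw : size y <= size w by rewrite ew size_cat leq_addr.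
set j := spp w in jy *.
have := spp_isep (leq_trans jy yw); rewrite -/j => /andP [/andP [j0 ev] pj].
have tj : take j w = take j y by rewrite ew takel_cat.
have noi : forall i, i < j -> ~~ (0 < i) || odd i || ~~ pal (take i y).
  move=> i ij; have := spp_min ij; rewrite /isep.
  have -> : take i w = take i y by rewrite ew takel_cat // ltnW // (leq_trans ij jy).
  by case: (0 < i); case: (odd i).
have sj : size (take j y) = j by rewrite size_takel.
have bj : bl 2 (take j y) = j.
  rewrite -{2}sj; apply: bl_full => i; rewrite sj => ij.
  apply/negP => hb; have ptj : pal (take j y) by rewrite -tj.
  case: (isb_pal ptj _ hb); first by rewrite sj ltnW.
  move=> i0 ei; rewrite take_takel ?(ltnW ij) // => pi.
  by have := noi i ij; rewrite i0 (negbTE ei) pi.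
split; rewrite ?j0 ?ev ?tj //.
- exact: leq_trans jy yw.
- by rewrite -tj.
case: (ltngtP j (size y)) => hj; [|by move: jy; rewrite leqNgt hj|by rewrite ew hj drop_size_cat].
have hisb : isb 2 y j.
  by apply: pal_isb => //; rewrite ?ltnW // -tj.
have bly : bl 2 y = j.
  apply: bl_eq => // i ij; apply/negP => hb.
  case: (isb_pal py _ hb); first by rewrite ltnW // (ltn_trans ij).
  by move=> i0 ei pi; have := noi i ij; rewrite i0 (negbTE ei) pi.
have d2 : 2 %| size y by rewrite sy dvdn2 odd_double.
have hl : bl 2 y < size y by rewrite bly.
case: (D1 d2 hl); rewrite bly => ey _ _ _.
set z := take _ (drop j y) in ey.
have sz : size z = size y - j.*2.
  by rewrite size_takel // size_drop leq_sub2l // -addnn leq_addr.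
have := py; rewrite ey => /L1pal /andP [pt pz].
have ptj : pal (take j y) by [].
rewrite ew drop_cat hj ey drop_size_cat ?sj //.
apply: palstar_cat pr; apply: palstar_cat; apply: palstar_pal.
- exact/eqP.
- have hh : ~~ odd (size y - j.*2).
    by apply: even_sub; [by rewrite -dvdn2 | by rewrite odd_double].
  by rewrite sz.
- exact/eqP.
- by rewrite sj.
Qed.

Lemma spp_prime b w' : pal b -> ~~ odd (size b) -> 0 < size b -> bl 2 b = size b ->
  spp (b ++ w') = size b.
Proof.
move=> pb ev b0 hb; apply: (spp_eq (w := b ++ w') (j := size b)).
- by rewrite size_cat leq_addr.
- rewrite /isep b0 ev take_size_cat //.
move=> i ib; apply/negP; rewrite /isep takel_cat; last exact: ltnW.
move=> /andP [/andP [i0 ei] pi].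
have := bl_min (d := 2) (w := b) (i := i); rewrite hb => /(_ ib).
by rewrite pal_isb //; exact: ltnW.
Qed.

End Palstar.

Section Final.
Variable T : finType.
Implicit Types w b z x : seq T.

Definition Pn n := count (fun w : seq T => `[< palstar w >]) (W T n.*2).

Lemma P_rec n : 0 < n ->
  Pn n = \sum_(m < n.+1) (if (m : nat) == 0 then 0 else Q T m * Pn (n - m)).
Proof.
move=> n0; rewrite /Pn -size_filter (@size_partition _ _ (fun w => spp w %/ 2) n.+1).
  apply: eq_bigr => -[m hm] _ /=.
  case: (posnP m) => [->|m0] /=.
    apply/eqP; rewrite eqn0Ngt -has_count; apply/hasPn => w.
    rewrite mem_filter mem_W => /andP [/asboolP pw /eqP sw].
    have wn : w != [::] by rewrite -size_eq0 sw double_eq0 -lt0n.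
    case: (KMP pw wn) => /andP [j0 ev] _ _ _ _.
    rewrite divn2; apply/negP => /eqP h.
    by move: (odd_double_half (spp w)); rewrite h (negbTE ev); lia.
  rewrite -(size_filter _ (filter _ _)) -/(Q T m).
  rewrite /Q -!size_filter -(size_allpairs cat).
  apply: size_bij.
  - by rewrite !filter_uniq // uniq_W.
  - apply: allpairs_uniq; try by rewrite !filter_uniq // uniq_W.
    move=> [b z] [b' z'] /allpairsP [[b1 z1] /= [hb _ [-> _]]] /allpairsP [[b2 z2] /= [hb' _ [-> _]]] /= /eqP.
    move: hb hb'; rewrite !mem_filter !mem_W => /and3P [_ _ /eqP sb] /and3P [_ _ /eqP sb'].
    by rewrite eqseq_cat ?sb ?sb' // => /andP [/eqP -> /eqP ->].
  - move=> w; rewrite !mem_filter mem_W; apply/idP/allpairsP.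
    + case/and3P => /eqP hs /asboolP pw /eqP sw.
      have wn : w != [::] by rewrite -size_eq0 sw double_eq0 -lt0n.
      case: (KMP pw wn) => /andP [j0 ev] jw pj bj pd.
      have ej : spp w = m.*2.
        move: (odd_double_half (spp w)); rewrite (negbTE ev) -divn2 hs add0n => <- //.
      have st : size (take (spp w) w) = spp w by rewrite size_takel.
      exists (take (spp w) w, drop (spp w) w) => /=; split.
      * by rewrite !mem_filter pj st bj eqxx mem_W st ej /=.
      * rewrite mem_filter mem_W size_drop sw ej -doubleB eqxx andbT.
        by apply: asboolT; rewrite -ej.
      * by rewrite cat_take_drop.
    + case=> -[b z] /=; rewrite !mem_filter !mem_W.
      move=> -[/and3P [/eqP hb pb /eqP sb] /andP [/asboolP pz /eqP sz] ->].
      have ev : ~~ odd (size b) by rewrite sb odd_double.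
      have b0 : 0 < size b by rewrite sb double_gt0.
      rewrite spp_prime // sb divn2 doubleK eqxx /=.
      rewrite size_cat sb sz -doubleD subnKC ?eqxx ?andbT; last by lia.
      apply: asboolT; apply: palstar_cat => //; apply: palstar_pal => //.
      exact/eqP.
move=> w; rewrite mem_filter mem_W => /andP [/asboolP pw /eqP sw].
have wn : w != [::] by rewrite -size_eq0 sw double_eq0 -lt0n.
case: (KMP pw wn) => _ jw _ _ _.
rewrite ltnS divn2 -[n](doubleK n) -sw; exact: half_leq.
Qed.

Lemma card_tuple_count (P : pred (seq T)) n :
  #|[set w : n.-tuple T | P w]| = count P (W T n).
Proof.
rewrite cardsE cardE /enum_mem size_filter -enumT.
have -> : count (mem (fun x : n.-tuple T => P x)) (enum {: n.-tuple T}) =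
          count P (map val (enum {: n.-tuple T})) by rewrite count_map.
apply/(permP _); apply: uniq_perm.
- by rewrite map_inj_uniq ?enum_uniq //; exact: val_inj.
- exact: uniq_W.
move=> w; rewrite mem_W; apply/mapP/idP.
  by case=> t _ ->; rewrite size_tuple.
by move/eqP => h; exists (Tuple (introT eqP h)); rewrite ?mem_enum.
Qed.


Lemma unb_bl w : `[< unbordered w >] = (bl 1 w == size w).
Proof.
apply/asboolP/eqP => [hu | hb].
  apply: bl_full => i iw; apply/negP => /andP [/andP [i0 _] /eqP e].
  apply: hu; exists (take i w); split; [|split; [|split]].
  - by rewrite -size_eq0 size_takel ?(ltnW iw) // -lt0n.
  - by apply/negP => /eqP h; move: (congr1 size h); rewrite size_takel ?(ltnW iw) //; lia.
  - by rewrite prefixE size_takel ?(ltnW iw).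
  - by rewrite suffixE size_takel ?(ltnW iw) // e.
move=> [x [xn [xw [px sx]]]].
rewrite prefixE in px; rewrite suffixE in sx.
have sxw : size x <= size w.
  by rewrite -(eqP px) size_take_min geq_minr.
have hlt : size x < size w.
  rewrite ltn_neqAle sxw andbT; apply/negP => /eqP h.
  by move: px; rewrite h take_size => /eqP e; rewrite e eqxx in xw.
have := bl_min (d := 1) (w := w) (i := size x); rewrite hb => /(_ hlt).
rewrite /isb lt0n size_eq0 xn dvd1n (eqP px) (eqP sx) eqxx.
by [].
Qed.

End Final.

Import GRing.Theory.

Lemma nat_id (T : finType) n : 0 < n ->
  \sum_(i < n) Pn T i * U T (n - i) = Pn T n.
Proof.
move=> n0; rewrite (P_rec T n0) big_ord_recl /= add0n.
rewrite -(big_mkord xpredT (fun i => Pn T i * U T (n - i))) big_rev_mkord subn0.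
apply: eq_bigr => i _; rewrite -QU /bump /= add1n mulnC.
have -> : n - (n - i.+1) = i.+1 by have := ltn_ord i; lia.
by rewrite subnS.
Qed.

Local Open Scope ring_scope.

Theorem theorem2 (k : nat) (hk : (2 <= k)%N) :
  pser_mul (P_k k) (pser_sub (pser_const 2) (U_k k)) = pser_const 1.
Proof.
have hp : forall n, p_count k n = Pn 'I_k n.
  move=> n; rewrite /p_count.
  exact: (card_tuple_count (fun w => `[< palstar w >]) n.*2).
have hu : forall n, u_count k n = U 'I_k n.
  move=> n; rewrite /u_count.
  rewrite (card_tuple_count (fun w => `[< unbordered w >]) n).
  by apply: eq_count => w; rewrite unb_bl.
apply: funext => n; rewrite /pser_mul /pser_sub /pser_const /P_k /U_k.
rewrite big_ord_recr /= subnn eqxx hp hu.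
have u0 : U 'I_k 0 = 1%N by [].
rewrite u0.
have -> : \sum_(i < n) (p_count k i)%:Z * ((if (n - i)%N == 0%N then 2 else 0) - (u_count k (n - i))%:Z)
        = - ((\sum_(i < n) Pn 'I_k i * U 'I_k (n - i))%N)%:Z.
  rewrite -natz natr_sum -sumrN; apply: eq_bigr => i _.
  have -> : (n - i)%N == 0%N = false by apply/negbTE; rewrite subn_eq0 -ltnNge.
  by rewrite hp hu natz PoszM sub0r mulrN.
case: (posnP n) => [->|n0].
  by rewrite big_ord0 /= /Pn /=; rewrite (_ : `[< palstar [::] >] = true) //; apply: asboolT; exact: palstar_nil.
rewrite nat_id //; lia.
Qed.
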